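(* Assume $\tilde R=R$ and $\tilde\Phi>\Phi$ (so $\tilde\rho>\rho$), that $c_A$ is convex and real-valued on $[0,\infty)$, that a maximizer $\tilde h_A$ of $\pi_{\tilde\rho}$ exists, that $\bar{\bar h}_A(h)<\infty$ for all $h\in(0,H)$, that $\bar{\bar h}_A$ is non-decreasing on $(0,H)$, and that $\hat h\in(0,H)$ satisfies $\hat h+\bar{\bar h}_A(\hat h)=H$. Then $0<\hat h<\tfrac12H$ and, if the miner's pre-attack hash power satisfies $h^*_A\in(\hat h,H)$, the incentive compatibility constraint $$\Big(\pi_{\rho}(h^*_A)-\pi_{\tilde\rho}\big(\max\{\tilde h_A,\underline h_A\}\big)\Big)\mathcal L\ \ge\ V_{attack}$$ fails for $V_{attack}=0$; i.e., there is no equilibrium without a majority attack even when the attack yields no private benefit.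
   Context: Proof-of-Work mining model. The aggregate hash power on the blockchain before an attack is $H>0$, the target time between blocks is $\tau>0$, and the difficulty is held fixed at $D=\tau H$, so a miner applying hash power $h$ alone on a chain mines in expectation $h/D$ blocks per unit of time. On the benchmark chain each block yields expected block reward $R\ge0$ and expected transaction fees $\Phi\ge0$; on the attacking chain the values are $\tilde R,\tilde\Phi$. Write $\rho=R+\Phi$, $\tilde\rho=\tilde R+\tilde\Phi$. The miner (potential attacker) $A$ has cost per unit time $c_A(h)$ of hash power $h\ge0$; flow profit at reward level $x$ is $\pi_x(h)=\frac hDx-c_A(h)$. $h^*_A$ is $A$'s pre-attack hash power (treated as a parameter in $(0,H)$); a successful attack requires at least $\underline h_A=\max\{\tfrac12H,H-h^*_A\}$; $\tilde h_A$ maximizes $\pi_{\tilde\rho}$ on $[0,\infty)$; $A$ attacks with $\max\{\tilde h_A,\underline h_A\}$; expected attack duration is $\mathcal L>0$. $V_{attack}\ge0$ is $A$'s private benefit from a successful attack. For $h\in(0,H)$, $\bar{\bar h}_A(h)=\sup\{h'>h:\pi_{\tilde\rho}(h')\ge\pi_\rho(h)\}$. *)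

(* Defs.v *)
From Stdlib Require Import Reals.
From Coquelicot Require Import Coquelicot.
Open Scope R_scope.

Definition convex_on_nonneg (c : R -> R) : Prop :=
  forall x y t, 0 <= x -> 0 <= y -> 0 <= t <= 1 ->
    c (t * x + (1 - t) * y) <= t * c x + (1 - t) * c y.

Definition difficulty (tau H : R) : R := tau * H.

Definition flow_profit (D : R) (c : R -> R) (x h : R) : R := h / D * x - c h.

(* Minimal hash power for a successful attack: max{H/2, H - h*_A}. *)
Definition h_low (H hstar : R) : R := Rmax (H / 2) (H - hstar).

(* hbarbar_A(h) = sup { h' > h : pi_rhot(h') >= pi_rho(h) }, as an extended real
   (Coquelicot's Lub_Rbar: +oo if unbounded, -oo if empty). *)
Definition hbarbar (D : R) (c : R -> R) (rho rhot h : R) : Rbar :=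
  Lub_Rbar (fun h' => h < h' /\ flow_profit D c rhot h' >= flow_profit D c rho h).

Definition ICC (D : R) (c : R -> R) (rho rhot H hstar htilde L Vattack : R) : Prop :=
  (flow_profit D c rho hstar
     - flow_profit D c rhot (Rmax htilde (h_low H hstar))) * L >= Vattack.

(* Main.v *)
Require Import Defs.
From Stdlib Require Import Reals Lra Classical.
From Coquelicot Require Import Coquelicot.
Open Scope R_scope.

Lemma concave_fp (D r : R) (c : R -> R) (HD : 0 < D) (Hconv : convex_on_nonneg c)
  x y t : 0 <= x -> 0 <= y -> 0 <= t <= 1 ->
  flow_profit D c r (t * x + (1 - t) * y) >=
  t * flow_profit D c r x + (1 - t) * flow_profit D c r y.
Proof.
  intros Hx Hy Ht. unfold flow_profit.
  pose proof (Hconv x y t Hx Hy Ht).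
  assert (E : (t * x + (1 - t) * y) / D * r = t * (x / D * r) + (1 - t) * (y / D * r))
    by (field; lra).
  rewrite E. lra.
Qed.

Lemma hbb_ub (D : R) c rho rhot h x :
  h < x -> flow_profit D c rhot x >= flow_profit D c rho h ->
  Rbar_le (Finite x) (hbarbar D c rho rhot h).
Proof.
  intros. unfold hbarbar. destruct (Lub_Rbar_correct
    (fun h' => h < h' /\ flow_profit D c rhot h' >= flow_profit D c rho h)) as [Hub _].
  apply Hub. split; assumption.
Qed.

Lemma hbb_le (D : R) c rho rhot h (b : R) :
  (forall x, h < x -> flow_profit D c rhot x >= flow_profit D c rho h -> x <= b) ->
  Rbar_le (hbarbar D c rho rhot h) (Finite b).
Proof.
  intros Hb. unfold hbarbar. destruct (Lub_Rbar_correct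
    (fun h' => h < h' /\ flow_profit D c rhot h' >= flow_profit D c rho h)) as [_ Hl].
  apply Hl. intros x [Hx1 Hx2]. simpl. apply Hb; assumption.
Qed.

Theorem proposition1
  (H tau Rw Phi Rwt Phit L : R) (c : R -> R) (htilde hhat : R)
  (HH : 0 < H) (Htau : 0 < tau) (HL : 0 < L)
  (HRw : 0 <= Rw) (HPhi : 0 <= Phi) (HRwt : 0 <= Rwt) (HPhit : 0 <= Phit)
  (HReq : Rwt = Rw) (HPhilt : Phi < Phit)
  (Hconv : convex_on_nonneg c)
  (Hht0 : 0 <= htilde)
  (Hhtmax : forall h, 0 <= h ->
     flow_profit (difficulty tau H) c (Rwt + Phit) h
       <= flow_profit (difficulty tau H) c (Rwt + Phit) htilde)
  (Hfin : forall h, 0 < h < H ->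
     Rbar_lt (hbarbar (difficulty tau H) c (Rw + Phi) (Rwt + Phit) h) p_infty)
  (Hmono : forall h1 h2, 0 < h1 < H -> 0 < h2 < H -> h1 <= h2 ->
     Rbar_le (hbarbar (difficulty tau H) c (Rw + Phi) (Rwt + Phit) h1)
             (hbarbar (difficulty tau H) c (Rw + Phi) (Rwt + Phit) h2))
  (Hhhat : 0 < hhat < H)
  (Hhhat_eq : Rbar_plus (Finite hhat)
                (hbarbar (difficulty tau H) c (Rw + Phi) (Rwt + Phit) hhat) = Finite H) :
  0 < hhat < H / 2 /\
  (forall hstar, hhat < hstar < H ->
     ~ ICC (difficulty tau H) c (Rw + Phi) (Rwt + Phit) H hstar htilde L 0).
Proof.
  set (D := difficulty tau H).
  assert (HD : 0 < D) by (unfold D, difficulty; nra).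
  set (rho := Rw + Phi). set (rhot := Rwt + Phit).
  assert (Hr : rho < rhot) by (unfold rho, rhot; lra).
  assert (Hrt0 : 0 <= rhot) by (unfold rhot; lra).
  assert (Hgap : forall h, 0 < h -> flow_profit D c rhot h > flow_profit D c rho h).
  { intros h Hh. unfold flow_profit.
    assert (h / D * rhot - h / D * rho = h / D * (rhot - rho)) by ring.
    assert (0 < h / D) by (apply Rdiv_lt_0_compat; lra).
    assert (0 < h / D * (rhot - rho)) by (apply Rmult_lt_0_compat; lra). lra. }
  fold D rho rhot in Hhhat_eq, Hmono, Hhtmax.
  destruct (hbarbar D c rho rhot hhat) as [r| |] eqn:Er; simpl in Hhhat_eq;
    try discriminate.
  injection Hhhat_eq as Hr0.
  assert (Hex : exists x, hhat < x /\ flow_profit D c rhot x >= flow_profit D c rho hhat).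
  { set (y := hhat + 1).
    set (K := Rabs (c y - c hhat)).
    set (del := flow_profit D c rhot hhat - flow_profit D c rho hhat).
    assert (Hdel : 0 < del) by (unfold del; pose proof (Hgap hhat ltac:(lra)); lra).
    set (s := Rmin (1/2) (del / (K + 1))).
    assert (HK : 0 <= K) by apply Rabs_pos.
    assert (Hs0 : 0 < s).
    { unfold s. apply Rmin_pos; [lra|]. apply Rdiv_lt_0_compat; lra. }
    assert (Hs1 : s <= 1/2) by apply Rmin_l.
    assert (Hs2 : s <= del / (K + 1)) by apply Rmin_r.
    assert (HsK : s * K <= del).
    { apply Rle_trans with (del / (K + 1) * K).
      - apply Rmult_le_compat_r; lra.
      - unfold Rdiv. rewrite Rmult_assoc.
        assert (/ (K+1) * K <= 1).
        { apply Rmult_le_reg_l with (K+1); [lra|].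
          rewrite <- Rmult_assoc, Rinv_r by lra. lra. }
        assert (0 <= del) by lra. nra. }
    exists ((1 - s) * hhat + (1 - (1 - s)) * y). split.
    - unfold y. nra.
    - pose proof (concave_fp D rhot c HD Hconv hhat y (1 - s) ltac:(lra) ltac:(unfold y; lra)
        ltac:(lra)).
      assert (Hfy : flow_profit D c rhot y - flow_profit D c rhot hhat >= - K).
      { unfold flow_profit.
        assert (y / D * rhot >= hhat / D * rhot).
        { apply Rle_ge. apply Rmult_le_compat_r; [lra|].
          unfold Rdiv. apply Rmult_le_compat_r; [left; apply Rinv_0_lt_compat; lra|].
          unfold y; lra. }
        assert (c y - c hhat <= K) by (unfold K; apply Rle_abs). lra. }
      assert (s * (flow_profit D c rhot y - flow_profit D c rhot hhat) >= s * (- K)).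
      { apply Rle_ge, Rmult_le_compat_l; lra. }
      unfold del in HsK. nra. }
  destruct Hex as [x [Hx1 Hx2]].
  pose proof (hbb_ub D c rho rhot hhat x Hx1 Hx2) as Hxr. rewrite Er in Hxr. simpl in Hxr.
  assert (Hhalf : hhat < H / 2) by lra.
  split; [lra|].
  intros hstar Hhs. unfold ICC. fold D rho rhot.
  set (hl := h_low H hstar).
  assert (Hhl : hl < H - hhat).
  { unfold hl, h_low. apply Rmax_lub_lt; lra. }
  assert (Hhl0 : H - hstar <= hl) by (unfold hl, h_low; apply Rmax_r).
  assert (Hst : flow_profit D c rhot htilde > flow_profit D c rho hstar).
  { pose proof (Hhtmax hstar ltac:(lra)). pose proof (Hgap hstar ltac:(lra)). lra. }
  assert (Hkey : flow_profit D c rhot (Rmax htilde hl) > flow_profit D c rho hstar).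
  { unfold Rmax. destruct (Rle_dec htilde hl) as [Hle|Hle]; [|exact Hst].
    destruct (Req_dec htilde hl) as [Heq|Hne]; [rewrite <- Heq; exact Hst|].
    destruct (classic (exists x', hstar < x' /\
        flow_profit D c rhot x' >= flow_profit D c rho hstar /\ hl < x')) as [[x' [Hx'1 [Hx'2 Hx'3]]]|Hno].
    - set (t := (x' - hl) / (x' - htilde)).
      assert (Hxt : 0 < x' - htilde) by lra.
      assert (Ht0 : 0 < t) by (unfold t; apply Rdiv_lt_0_compat; lra).
      assert (Ht1 : t < 1).
      { unfold t. apply Rmult_lt_reg_r with (x' - htilde); [lra|].
        unfold Rdiv. rewrite Rmult_assoc, Rinv_l by lra. lra. }
      assert (Hcomb : t * htilde + (1 - t) * x' = hl).
      { unfold t. field_simplify; [|lra]. field; lra. }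
      pose proof (concave_fp D rhot c HD Hconv htilde x' t Hht0 ltac:(lra) ltac:(lra)).
      rewrite Hcomb in H0. nra.
    - exfalso.
      assert (Hle2 : Rbar_le (hbarbar D c rho rhot hstar) (Finite hl)).
      { apply hbb_le. intros y Hy1 Hy2. destruct (Rle_dec y hl) as [|Hn]; [assumption|].
        exfalso. apply Hno. exists y. repeat split; try assumption. lra. }
      pose proof (Hmono hhat hstar ltac:(lra) ltac:(lra) ltac:(lra)) as Hm.
      rewrite Er in Hm.
      pose proof (Rbar_le_trans _ _ _ Hm Hle2). simpl in H0. lra. }
  intro Hc. assert (0 < (flow_profit D c rhot (Rmax htilde hl) - flow_profit D c rho hstar) * L)
    by (apply Rmult_lt_0_compat; lra). lra.
Qed.
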